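(* In the setting of the context, suppose $G_{xy}^{[1]}=1$ and $G_x\cong D_{20}$. Then $G_e\cong D_8$.
   Context: $\mathcal{A}=(G_x,G_e,G_{xy})$ is a finite, primitive amalgam of degree $(5,2)$ (no nontrivial subgroup of $G_{xy}$ normal in both $G_x$ and $G_e$; $|G_x:G_{xy}|=5$, $|G_e:G_{xy}|=2$), $G=G_x*_{G_{xy}}G_e$ acts on the coset graph (5-valent tree) $\Gamma$, $x$ is the vertex with stabiliser $G_x$, $y$ the neighbour with $G_e$ the setwise stabiliser of $\{x,y\}$ and $G_x\cap G_y=G_{xy}$. $G_z^{[1]}$ is the pointwise stabiliser of $z$ and its neighbours, $G_{xy}^{[1]}=G_x^{[1]}\cap G_y^{[1]}$. $D_{2n}$ denotes the dihedral group of order $2n$. *)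

(* Defs.v *)
From mathcomp Require Import all_boot all_fingroup all_solvable.
Set Implicit Arguments. Unset Strict Implicit. Unset Printing Implicit Defensive.
Local Open Scope group_scope.

(* An amalgam (G_x, G_e, G_xy) realised inside an ambient finite group gT:
   G_xy = G_x :&: G_e. *)
Definition amalgam (gT : finGroupType) (Gx Ge Gxy : {set gT}) : Prop :=
  Gx :&: Ge = Gxy.

Definition primitive_amalgam (gT : finGroupType) (Gx Ge Gxy : {set gT}) : Prop :=
  forall H : {group gT}, H \subset Gxy -> H <| Gx -> H <| Ge -> H :=: 1.

(* G_x^[1]: kernel of the action of G_x on the neighbours of x,
   i.e. on the cosets G_x/G_xy; this is the core of G_xy in G_x. *)
Definition vstab1 (gT : finGroupType) (Gx Gxy : {set gT}) : {set gT} :=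
  gcore Gxy Gx.

(* G_y = G_x^t for t in G_e \ G_xy; G_y^[1] = (G_x^[1])^t.
   G_xy^[1] = G_x^[1] :&: G_y^[1]. *)
Definition estab1 (gT : finGroupType) (Gx Ge Gxy : {set gT}) : {set gT} :=
  vstab1 Gx Gxy :&: (vstab1 Gx Gxy :^ repr (Ge :\: Gxy)).

(* Main.v *)
Require Import Defs.
From mathcomp Require Import all_boot all_fingroup all_solvable.
From mathcomp Require Import zify.
Local Open Scope group_scope.

Lemma commute_conj (gT : finGroupType) (x y : gT) : x ^ y = x -> commute x y.
Proof. by move=> h; rewrite /commute conjgC h. Qed.

Lemma conj_commute (gT : finGroupType) (x y : gT) : commute x y -> x ^ y = x.
Proof. by move=> h; rewrite /conjg h mulKg. Qed.

Theorem mainTheorem6 (gT : finGroupType) (Gx Ge Gxy : {group gT}) :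
  amalgam Gx Ge Gxy ->
  primitive_amalgam Gx Ge Gxy ->
  #|Gx : Gxy| = 5%N ->
  #|Ge : Gxy| = 2%N ->
  estab1 Gx Ge Gxy = 1 ->
  Gx \isog 'D_20 ->
  Ge \isog 'D_8.
Proof.
move=> amal prim iX iE _ isoX.
have sVX : Gxy \subset Gx by rewrite -amal subsetIl.
have sVE : Gxy \subset Ge by rewrite -amal subsetIr.
have oX : #|Gx| = 20%N.
  by rewrite (card_isog isoX) (@card_dihedral 10).
have oV : #|Gxy| = 4%N.
  by move: (Lagrange sVX); rewrite oX iX; lia.
have oE : #|Ge| = 8%N.
  by move: (Lagrange sVE); rewrite oV iE.
have nVE : Gxy <| Ge by apply: index2_normal.
have abV : abelian Gxy by apply: (@card_p2group_abelian _ 2).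
have : Gx \homg 'D_(10.*2) by apply: isog_hom.
rewrite (@Grp_dihedral 10) //.
case/existsP=> -[x y] /= /eqP[defG xq y2 xy].
have Xx : x \in Gx by rewrite -defG mem_gen // inE cycle_id.
have Xy : y \in Gx by rewrite -defG mem_gen // inE cycle_id orbT.
have defG2 : <[x]> * <[y]> = Gx.
  by rewrite -norm_joinEr // norms_cycle xy groupV cycle_id.
have ox : #[x] = 10%N.
  have d10 : #[x] %| 10 by rewrite order_dvdn xq.
  have d2 : #[y] %| 2 by rewrite order_dvdn y2.
  have := mul_cardG <[x]> <[y]>; rewrite defG2 oX -!orderE.
  have l2 := dvdn_leq (isT : 0 < 2) d2; have l10 := dvdn_leq (isT : 0 < 10) d10.
  have : 0 < #|<[x]> :&: <[y]>| by rewrite cardG_gt0.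
  move=> h1 h2; have h3 : 10 <= #[x] by nia.
  by apply/eqP; rewrite eqn_leq l10 h3.
set z := x ^+ 5.
have oz : #[z] = 2%N by rewrite orderXdiv ox.
have Xz : z \in Gx by rewrite groupX.
have zV : z^-1 = z by rewrite invg_expg oz.
have zy : z ^ y = z by rewrite /z conjXg xy expVgn -/z zV.
have ZN : <[z]> \subset 'Z(Gx).
  rewrite cycle_subG inE Xz -sub_cent1 -defG join_subG !cycle_subG.
  rewrite /=; apply/andP; split; apply/cent1P.
    exact: commuteX.
  by apply/commute_sym/commute_conj.
have nNX : <[z]> <| Gx by apply: sub_center_normal.
have zV' : z \in Gxy.
  have sNO : <[z]> \subset 'O_2(Gx).
    by apply: pcore_max => //; rewrite /pgroup -orderE oz.
  have sOV : 'O_2(Gx) \subset Gxy.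
    by apply: pcore_sub_Hall; rewrite /pHall sVX /pgroup oV iX.
  by rewrite -cycle_subG (subset_trans sNO sOV).
clearbody z; clear defG xq y2 xy Xx Xy defG2 ox zy ZN x y.
have Ez : z \in Ge by apply: (subsetP sVE).
have cV : forall a b, a \in Gxy -> b \in Gxy -> commute a b.
  by move=> a b Ha Hb; apply: (centsP abV).
have maxE : forall H : {group gT}, Gxy \subset H -> H \subset Ge ->
    ~~ (H \subset Gxy) -> H :=: Ge.
  move=> H sVH sHE nHV; apply: index1g => //.
  have h1 := Lagrange sHE; have h2 := Lagrange sVH.
  have h3 : #|H : Gxy| != 1%N.
    by apply: contra nHV => /eqP /(index1g sVH) <-.
  have := indexg_gt0 H Gxy; have := indexg_gt0 Ge H.
  rewrite oE oV in h1 h2; move: h3; nia.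
have key : forall g, g \in Ge -> g \notin Gxy -> z ^ g != z.
  move=> g Eg nVg; apply/negP => /eqP zg.
  have sVC : Gxy \subset 'C_Ge[z].
    rewrite subsetI sVE; apply/subsetP => a Va; apply/cent1P.
    exact: cV.
  have eC : 'C_Ge[z] :=: Ge.
    apply: maxE => //; first by rewrite subsetIl.
    apply/subsetPn; exists g => //; rewrite inE Eg; apply/cent1P.
    by apply/commute_sym/commute_conj.
  have nNE : <[z]> <| Ge.
    rewrite /normal cycle_subG Ez /=.
    apply: subset_trans (cent_sub _); by rewrite cent_cycle -{1}eC subsetIr.
  have := prim <[z]>%G; rewrite /= cycle_subG zV' => /(_ isT nNX nNE).
  by move=> h; move: oz; rewrite orderE h cards1.
have [t Et nVt] : exists2 t, t \in Ge & t \notin Gxy.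
  apply/subsetPn; apply/negP => sEV.
  by move: (subset_leq_card sEV); rewrite oE oV.
have nV : Ge \subset 'N(Gxy) by case/andP: nVE.
have Nt : t \in 'N(Gxy) by apply: (subsetP nV).
have Vc : t ^+ 2 \in Gxy.
  apply: coset_idr; first by rewrite groupX.
  rewrite morphX //.
  have oq : #|Ge / Gxy| = 2%N by rewrite card_quotient.
  by rewrite -oq expg_cardG // mem_quotient.
have z2 : z * z = 1 by rewrite -{2}zV mulgV.
set w := z ^ t.
have w2 : w * w = 1 by rewrite /w -conjMg z2 conj1g.
have Vw : w \in Gxy by rewrite /w memJ_norm.
have nwz : w != z by apply: key.
have wt : w ^ t = z.
  rewrite /w -conjgM.
  have -> : t * t = t ^+ 2 by rewrite expgS expg1.
  by rewrite conj_commute //; apply: cV.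
have e : z * t = t * w by rewrite conjgC.
have zt : z ^ t = w by [].
clearbody w.

have [u [Eu nVu ou]] : exists u, [/\ u \in Ge, u \notin Gxy & #[u] = 2%N].
  have [c1|c1] := eqVneq (t ^+ 2) 1.
    exists t; split => //; apply: nt_prime_order => //.
    by apply: contra nVt => /eqP ->.
  have czw : t ^+ 2 = z * w.
    set C := 'C_Gxy[t].
    have Cc : t ^+ 2 \in C by rewrite inE Vc; apply/cent1P/commute_sym/commuteX.
    have Czw : z * w \in C.
      rewrite inE groupM //; apply/cent1P/commute_conj.
      by rewrite conjMg zt wt; apply: cV.
    have nCz : z \notin C.
      by rewrite inE zV' /=; apply: contra (key t Et nVt) => /cent1P h; apply/eqP/conj_commute.
    have pC : C \proper Gxy.
      by apply/properP; split; [apply: subsetIl | exists z].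
    have lC : #|C| <= 2.
      move: (cardSg (subsetIl Gxy 'C[t])) (proper_card pC); rewrite -/C oV.
      by case: #|C| => [|[|[|[|]]]].
    have n1 : (1 : gT) != z * w.
      apply: contra nwz; rewrite eq_sym => /eqP h.
      by rewrite -[w]mul1g -z2 -mulgA h mulg1.
    have eC : C = [set 1; z * w] :> {set gT}.
      apply/eqP; rewrite eq_sym eqEcard cards2 n1 lC andbT.
      by rewrite subUset !sub1set Czw group1.
    by move: Cc; rewrite eC !inE (negPf c1) => /eqP.
  exists (t * z); split; first by rewrite groupM.
    by rewrite groupMr.
  apply: nt_prime_order => //.
    rewrite expgS expg1 -mulgA (mulgA z t z) e !mulgA.
    have -> : t * t = t ^+ 2 by rewrite expgS expg1.
    by rewrite czw -(mulgA z w w) w2 mulg1 z2.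
  by apply: contra nVt => /eqP h; rewrite -(groupMr _ zV') h group1.
have nuz : u != z by apply: contraNneq nVu => ->.
have iso := involutions_gen_dihedral ou oz nuz.
move: iso; set G := <<[set u; z]>> => iso.
have Gu : u \in G by rewrite mem_gen // !inE eqxx.
have Gz : z \in G by rewrite mem_gen // !inE eqxx orbT.
have sGE : G \subset Ge by rewrite gen_subG subUset !sub1set Eu Ez.
have pG : 2.-group G by apply: pgroupS sGE _; rewrite /pgroup oE.
have oG : #|G| = 8%N.
  have dG : #|G| %| 8 by rewrite -oE cardSg.
  have nab : ~~ abelian G.
    apply/negP => abG; move: (key u Eu nVu); rewrite conj_commute ?eqxx //.
    by apply/commute_sym; apply: (centsP abG).
  move: dG nab; have := p2group_abelian pG.
  case: #|G| => [|[|[|[|[|[|[|[|[|]]]]]]]]] //=; by move=> ->.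
have eGE : G = Ge.
  by apply/eqP; rewrite eqEcard sGE oG oE.
have h : forall n, n = 8%N -> G \isog [set: 'D_n] -> G \isog [set: 'D_8].
  by move=> n ->.
rewrite -eGE; exact: (h _ oG iso).
Qed.
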